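(* Let $\nu,\mu\in\Lambda(n;r)$. Then $\xi_\nu J_R(n,r)\xi_\mu=0$ unless $\nu\triangleright\mu$. If $\nu\triangleright\mu$, then $\{\xi_\omega:\omega\in\Lambda^1(n,n;r),\ \omega^1=\mu,\ \omega^2=\nu\}$ is an $R$-basis of the free $R$-module $\xi_\nu J_R(n,r)\xi_\mu$.
   Context: $R$ commutative ring with identity, $n,r$ positive integers. $\Lambda(n;r)$: compositions $(\lambda_1,\dots,\lambda_n)\in\mathbb{N}_0^n$ with sum $r$. $\Lambda(n,n;r)$: $n\times n$ nonnegative integer matrices with total sum $r$; $(\omega^1)_t=\sum_s\omega_{st}$, $(\omega^2)_s=\sum_t\omega_{st}$. For $i,j\in I(n,r)=\{1,\dots,n\}^r$, $\operatorname{wt}(i,j)_{st}=\#\{q:i_q=s,j_q=t\}$, $(i,j)\in\omega$ means $\operatorname{wt}(i,j)=\omega$. $S_R(n,r)=\mathrm{End}_{R\Sigma_r}((R^n)^{\otimes r})$ ($e_i\sigma=e_{i\sigma}$), with basis $\xi_\omega=\sum_{(i,j)\in\omega}e_{i,j}$ ($e_{i,j}e_k=\delta_{jk}e_i$); $\xi_\lambda:=\xi_{\mathrm{diag}(\lambda)}$ for $\lambda\in\Lambda(n;r)$. $\Lambda^1(n,n;r)$ is the set of upper triangular $\omega$ with $\sum_{k\le l}(l-k)\omega_{kl}\ge1$, and $J_R(n,r)$ is the $R$-span of $\{\xi_\omega:\omega\in\Lambda^1(n,n;r)\}$. Dominance: $\nu\trianglerighteq\mu$ if $\sum_{s=1}^t\nu_s\ge\sum_{s=1}^t\mu_s$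 for all $t$, and $\nu\triangleright\mu$ if $\nu\trianglerighteq\mu$ and $\nu\ne\mu$. *)

(* Defs.v *)
From HB Require Import structures.
From mathcomp Require Import all_boot all_order all_algebra all_fingroup.
Set Implicit Arguments. Unset Strict Implicit. Unset Printing Implicit Defensive.
Import GRing.Theory.
Local Open Scope ring_scope.

(* Indices 1..n are represented by 'I_n (0-based), positions 1..r by 'I_r. *)

Notation I n r := {ffun 'I_r -> 'I_n}.

Notation cmp n := {ffun 'I_n -> nat}.
Definition is_comp (n r : nat) (la : cmp n) : bool := (\sum_(s < n) la s == r)%N.

Notation nmat n := 'M[nat]_n.
Definition in_Lnnr (n r : nat) (w : nmat n) : bool :=
  (\sum_(s < n) \sum_(t < n) w s t == r)%N.

Definition om1 (n : nat) (w : nmat n) : cmp n := [ffun t => \sum_(s < n) w s t]%N.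
Definition om2 (n : nat) (w : nmat n) : cmp n := [ffun s => \sum_(t < n) w s t]%N.

Definition wt (n r : nat) (i j : I n r) : nmat n :=
  \matrix_(s, t) #|[pred q : 'I_r | (i q == s) && (j q == t)]|.

Definition diagc (n : nat) (la : cmp n) : nmat n :=
  \matrix_(s, t) (if s == t then la s else 0%N).

(* R-endomorphisms of (R^n)^{tensor r}, as matrices w.r.t. the basis e_i
   (i in I(n,r)): the entry at (i,j) is the coefficient of e_{i,j}, where
   e_{i,j} e_k = delta_{jk} e_i.  The Schur algebra S_R(n,r) is the subalgebra
   of Sigma_r-equivariant ones (see is_schur); multiplication is composition. *)
Notation EndT R n r := {ffun I n r * I n r -> R^o}.

Definition emul (R : pzRingType) (n r : nat) (A B : EndT R n r) : EndT R n r :=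
  [ffun p => \sum_(k : I n r) A (p.1, k) * B (k, p.2)].

Definition iact (n r : nat) (i : I n r) (sg : {perm 'I_r}) : I n r :=
  [ffun q => i (sg q)].
Definition is_schur (R : pzRingType) (n r : nat) (A : EndT R n r) : Prop :=
  forall (sg : {perm 'I_r}) (i j : I n r), A (iact i sg, iact j sg) = A (i, j).

Definition xi (R : pzRingType) (n r : nat) (w : nmat n) : EndT R n r :=
  [ffun p => if wt p.1 p.2 == w then 1 else 0].

Definition xil (R : pzRingType) (n r : nat) (la : cmp n) : EndT R n r :=
  xi R r (diagc la).

Definition in_L1 (n r : nat) (w : nmat n) : bool :=
  [&& in_Lnnr r w,
      [forall s : 'I_n, forall t : 'I_n, (t < s)%N ==> (w s t == 0%N)] &
      (1 <= \sum_(k < n) \sum_(l < n | (k <= l)%N) (l - k) * w k l)%N].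

Definition in_J (R : pzRingType) (n r : nat) (x : EndT R n r) : Prop :=
  exists (s : seq (nmat n)) (c : nmat n -> R),
    all (@in_L1 n r) s /\ x = \sum_(w <- s) c w *: xi R r w.

Definition in_xJx (R : pzRingType) (n r : nat) (nu mu : cmp n) (y : EndT R n r) : Prop :=
  exists x : EndT R n r, in_J x /\ y = emul (emul (xil R r nu) x) (xil R r mu).

Definition domin (n : nat) (nu mu : cmp n) : bool :=
  [forall t : 'I_n, (\sum_(s < n | (s <= t)%N) mu s <= \sum_(s < n | (s <= t)%N) nu s)%N].
Definition sdomin (n : nat) (nu mu : cmp n) : bool := domin nu mu && (nu != mu).

Definition is_basis_of (R : pzRingType) (n r : nat) (P : pred (nmat n))
    (M : EndT R n r -> Prop) : Prop :=
  [/\ (forall w, P w -> M (xi R r w)),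
      (forall (s : seq (nmat n)) (c : nmat n -> R), uniq s -> all P s ->
         \sum_(w <- s) c w *: xi R r w = 0 -> forall w, w \in s -> c w = 0) &
      (forall y, M y -> exists (s : seq (nmat n)) (c : nmat n -> R),
         all P s /\ y = \sum_(w <- s) c w *: xi R r w)].

(* Main.v *)
Require Import Defs.
From HB Require Import structures.
From mathcomp Require Import all_boot all_order all_algebra all_fingroup.
Import GRing.Theory.
Local Open Scope ring_scope.
Set Implicit Arguments. Unset Strict Implicit.

Lemma card_count r (P : pred 'I_r) : #|[pred q | P q]| = count P (enum 'I_r).
Proof. by rewrite enumT cardE /enum_mem -size_filter. Qed.

Lemma card_sum r (P : pred 'I_r) : #|[pred q | P q]| = (\sum_(q < r) P q)%N.
Proof. rewrite -sum1_card big_mkcond /=; apply: eq_bigr => q _; rewrite inE; by case: (P q). Qed.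

Lemma scaleE (R : pzRingType) n r (c : R) (f : EndT R n r) p : (c *: f) p = c * f p.
Proof. by rewrite /GRing.scale /= ffunE. Qed.

Definition cont n r (i : I n r) : cmp n := [ffun s => #|[pred q | i q == s]|].

Lemma wt_om2 n r (i j : I n r) : om2 (wt i j) = cont i.
Proof.
apply/ffunP => s; rewrite !ffunE card_sum.
under eq_bigr => t _ do rewrite mxE card_sum.
rewrite exchange_big /=; apply: eq_bigr => q _.
case: (i q == s) => /=; last by rewrite big1.
by rewrite (bigD1 (j q)) //= eqxx big1 // => t /negbTE; rewrite eq_sym => ->.
Qed.

Lemma wt_om1 n r (i j : I n r) : om1 (wt i j) = cont j.
Proof.
apply/ffunP => t; rewrite !ffunE card_sum.
under eq_bigr => s _ do rewrite mxE card_sum.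
rewrite exchange_big /=; apply: eq_bigr => q _.
case: (j q == t); last by rewrite big1 // => s _; rewrite andbF.
by rewrite (bigD1 (i q)) //= eqxx big1 // => s /negbTE; rewrite eq_sym => ->.
Qed.

Lemma wt_diag n r (i k : I n r) (la : cmp n) :
  (wt i k == diagc la) = (i == k) && (cont i == la).
Proof.
have [<-|neik] /= := eqVneq i k.
  apply/eqP/eqP => [H|<-].
    apply/ffunP => s; have := congr1 (fun M : nmat n => M s s) H.
    by rewrite !mxE eqxx ffunE => <-; apply: eq_card => q; rewrite !inE andbb.
  apply/matrixP => s t; rewrite !mxE ffunE; case: eqP => [->|st].
    by apply: eq_card => q; rewrite !inE andbb.
  apply: eq_card0 => q; rewrite !inE.
  apply/negP => /andP [/eqP e1 /eqP e2]; apply: st; by rewrite -e1 -e2.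
apply/negbTE/negP => /eqP H.
have [q Hq] : exists q, i q != k q.
  apply/existsP; move: neik; apply: contraR; rewrite negb_exists => /forallP Hq.
  by apply/eqP/ffunP => q; have := Hq q; rewrite negbK => /eqP.
have := congr1 (fun M : nmat n => M (i q) (k q)) H.
rewrite !mxE (negbTE Hq) => /eqP; rewrite -leqn0 leqNgt => /negP; apply.
by apply/card_gt0P; exists q; rewrite !inE !eqxx.
Qed.

Lemma xilE (R : pzRingType) n r (la : cmp n) (i k : I n r) :
  xil R r la (i, k) = if (i == k) && (cont i == la) then 1 else 0.
Proof. by rewrite /xil /xi ffunE /= wt_diag. Qed.

Lemma xiE (R : pzRingType) n r (w : nmat n) (i k : I n r) :
  xi R r w (i, k) = if wt i k == w then 1 else 0.
Proof. by rewrite /xi ffunE. Qed.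

Lemma sandwich (R : pzRingType) n r (nu mu : cmp n) (x : EndT R n r) i j :
  emul (emul (xil R r nu) x) (xil R r mu) (i, j) =
  if (cont i == nu) && (cont j == mu) then x (i, j) else 0.
Proof.
rewrite ffunE /= (bigD1 j) //= big1 => [|k kj]; last first.
  by rewrite xilE (negbTE kj) mulr0.
rewrite addr0 xilE eqxx /= ffunE /= (bigD1 i) //= big1 => [|k ki]; last first.
  by rewrite xilE eq_sym (negbTE ki) mul0r.
rewrite addr0 xilE eqxx /=.
by case: (cont i == nu); case: (cont j == mu); rewrite ?mul1r ?mulr1 ?mul0r ?mulr0.
Qed.

From mathcomp Require Import zify.

Lemma L1_sdomin n r (w : nmat n) (nu mu : cmp n) :
  in_L1 r w -> om1 w = mu -> om2 w = nu -> sdomin nu mu.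
Proof.
case/and3P => _ /forallP HU HD <- <-.
have U : forall s t : 'I_n, (t < s)%N -> w s t = 0%N.
  by move=> s t ts; have /forallP/(_ t)/implyP/(_ ts)/eqP := HU s.
apply/andP; split.
  apply/forallP => t.
  under eq_bigr => s _ do rewrite ffunE.
  under [X in (_ <= X)%N]eq_bigr => s _ do rewrite ffunE.
  rewrite exchange_big /= (bigID (fun s' : 'I_n => (s' <= t)%N)) /=.
  rewrite [X in (_ + X)%N]big1 ?addn0 => [|s' Hs']; last first.
    by apply: big1 => s st; apply: U; rewrite -ltnNge in Hs'; apply: leq_ltn_trans Hs'.
  apply: leq_sum => s' _.
  by rewrite [X in (_ <= X)%N](bigID (fun s : 'I_n => (s <= t)%N)) /= leq_addr.
apply/eqP => E.
have key : (\sum_(s < n) (n - s) * (om2 w) s =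
   \sum_(s < n) (n - s) * (om1 w) s +
   \sum_(k < n) \sum_(l < n | (k <= l)%N) (l - k) * w k l)%N.
  transitivity (\sum_(s < n) \sum_(t < n) ((n - t) * w s t + (t - s) * w s t))%N.
    apply: eq_bigr => s _; rewrite ffunE big_distrr /=; apply: eq_bigr => t _.
    case: (ltnP t s) => ts.
      by rewrite U // !muln0.
    rewrite -mulnDl; congr (_ * _)%N; have := ltn_ord t; lia.
  under eq_bigr => s _ do rewrite big_split /=.
  rewrite big_split; congr (_ + _)%N.
    rewrite exchange_big; apply: eq_bigr => t _; rewrite ffunE big_distrr /=.
    by apply: eq_bigr.
  apply: eq_bigr => s _; rewrite [RHS]big_mkcond; apply: eq_bigr => t _.
  case: leqP => // ts; move/ltnW: ts; rewrite -subn_eq0 => /eqP ->; by rewrite mul0n.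
move: key; rewrite E => /eqP; rewrite -{1}[X in X == _]addn0 eqn_add2l eq_sym.
by move/eqP=> H0; move: HD; rewrite H0.
Qed.

Lemma realize n r (w : nmat n) : in_Lnnr r w -> exists i j : I n r, wt i j = w.
Proof.
move/eqP=> Hs.
pose l := flatten [seq nseq (w p.1 p.2) p | p <- enum {: 'I_n * 'I_n}].
have Hc : forall p, count_mem p l = w p.1 p.2.
  move=> p; rewrite count_flatten -map_comp sumnE big_map big_enum /=.
  rewrite (bigD1 p) //= count_nseq /= eqxx mul1n big1 ?addn0 // => x xp.
  by rewrite count_nseq /= (negbTE xp).
have Hl : size l == r.
  rewrite size_flatten /shape -map_comp sumnE big_map big_enum /=.
  rewrite -Hs pair_bigA /=; apply/eqP; apply: eq_bigr => p _.
  by rewrite size_nseq.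
pose t := Tuple Hl.
exists [ffun q => (tnth t q).1], [ffun q => (tnth t q).2].
apply/matrixP => s u; rewrite mxE.
transitivity #|[pred q | tnth t q == (s, u)]|.
  by apply: eq_card => q; rewrite !inE !ffunE; case: (tnth t q).
rewrite (card_count (fun q => tnth t q == (s, u))) -(Hc (s, u)) /=.
have -> : l = tval t by [].
by rewrite -[in RHS](map_tnth_enum t) count_map.
Qed.

Lemma sumE (R : pzRingType) n r (s : seq (nmat n)) (c : nmat n -> R) (i j : I n r) :
  (\sum_(w <- s) c w *: xi R r w) (i, j) =
  \sum_(w <- s) c w * (if wt i j == w then 1 else 0).
Proof. by rewrite sum_ffunE; apply: eq_bigr => w _; rewrite scaleE xiE. Qed.

Lemma zeroE (R : pzRingType) n r (p : I n r * I n r) : (0 : EndT R n r) p = 0.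
Proof. by rewrite ffunE. Qed.

Theorem proposition4p4 (R : comPzRingType) (n r : nat) (n_gt0 : (0 < n)%N)
    (r_gt0 : (0 < r)%N) (nu mu : cmp n) (Hnu : is_comp r nu) (Hmu : is_comp r mu) :
  (~~ sdomin nu mu -> forall y : EndT R n r, in_xJx nu mu y -> y = 0) /\
  (sdomin nu mu ->
     @is_basis_of R n r
       (fun w : nmat n => [&& in_L1 r w, om1 w == mu & om2 w == nu])
       (@in_xJx R n r nu mu)).
Proof.
split.
  move=> Hns y [x [[s [c [Hall ->]]] ->]].
  apply/ffunP => [[i j]]; rewrite sandwich zeroE.
  case: ifP => // /andP [/eqP ci /eqP cj].
  rewrite sumE big_seq big1 // => w ws.
  case: eqP => [ew|]; last by rewrite mulr0.
  exfalso; move/negP: Hns; apply; apply: (L1_sdomin (allP Hall w ws)).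
    by rewrite -ew wt_om1.
  by rewrite -ew wt_om2.
move=> Hsd; split.
- move=> w /and3P [HL /eqP H1 /eqP H2]; exists (xi R r w); split.
    exists [:: w], (fun _ => 1); split; first by rewrite /= HL.
    by rewrite big_seq1 scale1r.
  apply/ffunP => [[i j]]; rewrite sandwich.
  case: ifP => // /negbT Hc; rewrite xiE; case: eqP => // ew.
  by exfalso; move/negP: Hc; apply; rewrite -H1 -H2 -ew wt_om1 wt_om2 !eqxx.
- move=> s c us Hall H0 w ws.
  have /and3P [HL _ _] := allP Hall w ws.
  case/and3P: HL => Hn _ _.
  have [i [j eij]] := realize Hn.
  have := congr1 (fun f : EndT R n r => f (i, j)) H0.
  rewrite /= sumE zeroE (bigD1_seq w) //= eij eqxx mulr1 big1 ?addr0 // => v vw.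
  by rewrite eq_sym (negbTE vw) mulr0.
- move=> y [x [[s [c [Hall ->]]] ->]].
  exists [seq w <- s | [&& in_L1 r w, om1 w == mu & om2 w == nu]], c; split.
    by rewrite filter_all.
  apply/ffunP => [[i j]]; rewrite sandwich !sumE big_filter.
  case: ifP => [/andP [/eqP ci /eqP cj] | /negbT Hc].
    rewrite [RHS]big_mkcond big_seq [RHS]big_seq; apply: eq_bigr => w ws.
    rewrite (allP Hall w ws) /=.
    case: eqP => ew; last by rewrite mulr0; case: ifP.
    by rewrite -ew wt_om1 wt_om2 ci cj !eqxx.
  rewrite big1 // => w /and3P [_ /eqP H1 /eqP H2].
  case: eqP => ew; last by rewrite mulr0.
  by exfalso; move/negP: Hc; apply; rewrite -H1 -H2 -ew wt_om1 wt_om2 !eqxx.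
Qed.
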